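(* Assume $r<n$. Then for every solution of system (S) with initial condition in $\mathcal{D}^0$, the total mite population $M(t)+N(t)$ tends to $0$ as $t\to+\infty$.
   Context: All parameters $b,\lambda,\gamma,m,\mu,r,n,p,h,\beta,\delta,e$ are positive constants. Here $B,I$ denote healthy and infected bees and $M,N$ healthy and infected mites. The model (S) is $$B'=\frac{bB}{B+I}-\lambda BN-\gamma BI-mB,\qquad I'=\frac{bI}{B+I}+\lambda BN+\gamma BI-(m+\mu)I,$$ $$M'=r(M+N)-nM-\frac{p}{h(B+I)}M(M+N)-M(\beta I+\delta N+eB),$$ $$N'=-nN-\frac{p}{h(B+I)}N(M+N)+\beta MI+\delta MN-eNB,$$ considered on the domain $\mathcal{D}^0=\{(B,I,M,N)\in\mathbb{R}^4_+ : B+I\neq 0\}$, where $\mathbb{R}_+=[0,\infty)$. *)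

(* Defs.v *)
From Stdlib Require Import Reals Lra.
Open Scope R_scope.

Definition fB (b lam gam m : R) (B I M N : R) : R :=
  b * B / (B + I) - lam * B * N - gam * B * I - m * B.

Definition fI (b lam gam m mu : R) (B I M N : R) : R :=
  b * I / (B + I) + lam * B * N + gam * B * I - (m + mu) * I.

Definition fM (r n p h beta delta e : R) (B I M N : R) : R :=
  r * (M + N) - n * M - p / (h * (B + I)) * M * (M + N)
  - M * (beta * I + delta * N + e * B).

Definition fN (n p h beta delta e : R) (B I M N : R) : R :=
  - n * N - p / (h * (B + I)) * N * (M + N) + beta * M * I + delta * M * N
  - e * N * B.

Definition in_D0 (B I M N : R) : Prop :=
  0 <= B /\ 0 <= I /\ 0 <= M /\ 0 <= N /\ B + I <> 0.

Definition right_cont0 (f : R -> R) : Prop :=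
  forall eps, 0 < eps -> exists delta, 0 < delta /\
    forall t, 0 <= t < delta -> Rabs (f t - f 0) < eps.

Definition is_solution_S (b lam gam m mu r n p h beta delta e : R)
  (B I M N : R -> R) : Prop :=
  (forall t, 0 <= t -> B t + I t <> 0) /\
  (forall t, 0 < t ->
     derivable_pt_lim B t (fB b lam gam m (B t) (I t) (M t) (N t)) /\
     derivable_pt_lim I t (fI b lam gam m mu (B t) (I t) (M t) (N t)) /\
     derivable_pt_lim M t (fM r n p h beta delta e (B t) (I t) (M t) (N t)) /\
     derivable_pt_lim N t (fN n p h beta delta e (B t) (I t) (M t) (N t))) /\
  right_cont0 B /\ right_cont0 I /\ right_cont0 M /\ right_cont0 N.

(* Main.v *)
Require Import Defs.
From Stdlib Require Import Reals Lra.
From Coquelicot Require Import Coquelicot.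
Open Scope R_scope.

Lemma cp_plus f g x : continuity_pt f x -> continuity_pt g x -> continuity_pt (fun y => f y + g y) x.
Proof. intros; exact (continuity_pt_plus f g x H H0). Qed.
Lemma cp_minus f g x : continuity_pt f x -> continuity_pt g x -> continuity_pt (fun y => f y - g y) x.
Proof. intros; exact (continuity_pt_minus f g x H H0). Qed.
Lemma cp_mult f g x : continuity_pt f x -> continuity_pt g x -> continuity_pt (fun y => f y * g y) x.
Proof. intros; exact (continuity_pt_mult f g x H H0). Qed.
Lemma cp_div f g x : continuity_pt f x -> continuity_pt g x -> g x <> 0 -> continuity_pt (fun y => f y / g y) x.
Proof. intros; exact (continuity_pt_div f g x H H0 H1). Qed.
Lemma cp_const c x : continuity_pt (fun _ => c) x.
Proof. exact (continuity_pt_const (fun _ => c) x (fun _ _ => eq_refl)). Qed.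
Lemma cp_id x : continuity_pt (fun y => y) x.
Proof. exact (derivable_continuous_pt _ _ (derivable_pt_id x)). Qed.
Lemma cp_exp f x : continuity_pt f x -> continuity_pt (fun y => exp (f y)) x.
Proof. intros. exact (continuity_pt_comp f exp x H (derivable_continuous_pt _ _ (derivable_pt_exp _))). Qed.
Lemma cp_abs f x : continuity_pt f x -> continuity_pt (fun y => Rabs (f y)) x.
Proof. intros. exact (continuity_pt_comp f Rabs x H (Rcontinuity_abs _)). Qed.

Lemma dl_mult f g x l1 l2 : derivable_pt_lim f x l1 -> derivable_pt_lim g x l2 ->
  derivable_pt_lim (fun y => f y * g y) x (l1 * g x + f x * l2).
Proof. intros; exact (derivable_pt_lim_mult f g x l1 l2 H H0). Qed.
Lemma dl_plus f g x l1 l2 : derivable_pt_lim f x l1 -> derivable_pt_lim g x l2 ->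
  derivable_pt_lim (fun y => f y + g y) x (l1 + l2).
Proof. intros; exact (derivable_pt_lim_plus f g x l1 l2 H H0). Qed.
Lemma dl_eq f x l l' : derivable_pt_lim f x l -> l = l' -> derivable_pt_lim f x l'.
Proof. intros; subst; auto. Qed.
Lemma dl_expl c x : derivable_pt_lim (fun y => exp (c * y)) x (exp (c * x) * c).
Proof.
  apply (derivable_pt_lim_comp (fun y => c * y) exp x c (exp (c*x))).
  - apply dl_eq with (c * 1). 2: ring.
    exact (derivable_pt_lim_scal (fun y => y) c x 1 (derivable_pt_lim_id x)).
  - apply derivable_pt_lim_exp.
Qed.

Definition ext (f : R -> R) (t : R) := f (Rmax 0 t).

Lemma ext_eq f t : 0 <= t -> ext f t = f t.
Proof. intros; unfold ext; rewrite Rmax_right; auto. Qed.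

Lemma ext_cont f : right_cont0 f -> (forall t, 0 < t -> continuity_pt f t) ->
  forall t, 0 <= t -> continuity_pt (ext f) t.
Proof.
  intros Hr Hc t Ht.
  unfold continuity_pt, continue_in, limit1_in, limit_in, D_x, no_cond in *; simpl in *; unfold R_dist in *.
  intros eps Heps.
  destruct (Rle_lt_or_eq_dec _ _ Ht) as [Hp|H0].
  - specialize (Hc t Hp eps Heps). destruct Hc as [d [Hd Hd']].
    exists (Rmin d t); split. apply Rmin_pos; lra.
    intros x [_ Hx]. unfold ext. rewrite (Rmax_right 0 t) by lra.
    assert (Hx1 := Rmin_l d t). assert (Hx2 := Rmin_r d t).
    assert (0 < x) by (apply Rabs_def2 in Hx; lra).
    rewrite Rmax_right by lra.
    destruct (Req_dec x t). subst; rewrite Rminus_diag, Rabs_R0; lra. apply (Hd' x). split. split; auto. lra.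
  - subst t. destruct (Hr eps Heps) as [d [Hd Hd']].
    exists d; split; auto. intros x [_ Hx]. unfold ext.
    rewrite (Rmax_left 0 0) by lra.
    destruct (Rle_dec x 0).
    + rewrite Rmax_left by lra. rewrite Rminus_diag, Rabs_R0; auto.
    + rewrite Rmax_right by lra. apply Hd'. rewrite Rminus_0_r in Hx.
      apply Rabs_def2 in Hx. lra.
Qed.

Lemma ext_deriv f t l : 0 < t -> derivable_pt_lim f t l -> derivable_pt_lim (ext f) t l.
Proof.
  intros Ht H eps Heps. destruct (H eps Heps) as [d Hd].
  assert (Hp : 0 < Rmin d t) by (apply Rmin_pos; [destruct d; auto | lra]).
  exists (mkposreal _ Hp). intros h Hh Hh'. simpl in Hh'.
  assert (Hx1 := Rmin_l d t). assert (Hx2 := Rmin_r d t).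
  unfold ext. rewrite (Rmax_right 0 t) by lra.
  apply Rabs_def2 in Hh' as Hh''.
  rewrite (Rmax_right 0 (t+h)) by lra. apply Hd; auto. lra.
Qed.

Lemma mono_open F F' a b : a <= b ->
  (forall x, a <= x <= b -> derivable_pt_lim F x (F' x)) ->
  (forall x, a <= x <= b -> F' x <= 0) -> F b <= F a.
Proof.
  intros Hab Hd Hn.
  assert (E1 : Rmin a b = a) by (apply Rmin_left; lra).
  assert (E2 : Rmax a b = b) by (apply Rmax_right; lra).
  assert (H1 : forall x, Rmin a b < x < Rmax a b -> is_derive F x (F' x)).
  { rewrite E1, E2. intros. apply is_derive_Reals; apply Hd; lra. }
  assert (H2 : forall x, Rmin a b <= x <= Rmax a b -> continuity_pt F x).
  { rewrite E1, E2. intros.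
    apply derivable_continuous_pt. exists (F' x). apply Hd; lra. }
  destruct (MVT_gen F a b F' H1 H2) as [c [Hc1 Hc2]].
  rewrite E1, E2 in Hc1.
  assert (F' c <= 0) by auto. nra.
Qed.

Lemma cont_lt F x v : continuity_pt F x -> F x < v -> exists d, 0 < d /\ forall y, Rabs (y - x) < d -> F y < v.
Proof.
  intros Hc Hv.
  unfold continuity_pt, continue_in, limit1_in, limit_in, D_x, no_cond in Hc; simpl in Hc; unfold R_dist in Hc.
  destruct (Hc (v - F x)) as [d [Hd Hd']]. lra.
  exists d; split; auto. intros y Hy.
  destruct (Req_dec y x). subst; lra.
  assert (Rabs (F y - F x) < v - F x) by (apply Hd'; split; auto).
  apply Rabs_def2 in H0. lra.
Qed.

Lemma mono F F' a b : a <= b ->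
  (forall x, a < x < b -> derivable_pt_lim F x (F' x)) ->
  (forall x, a < x < b -> F' x <= 0) ->
  (forall x, a <= x <= b -> continuity_pt F x) -> F b <= F a.
Proof.
  intros Hab Hd Hn Hc.
  destruct (Rle_lt_or_eq_dec _ _ Hab) as [Hl|He]. 2:{ subst; lra. }
  destruct (Rle_or_lt (F b) (F a)) as [|Hgt]; auto. exfalso.
  set (eps := (F b - F a)/2).
  destruct (cont_lt F a (F a + eps)) as [d1 [Hd1 H1]]. apply Hc; lra. unfold eps; lra.
  destruct (cont_lt (fun y => - F y) b (- (F b - eps))) as [d2 [Hd2 H2]].
  apply continuity_pt_opp; apply Hc; lra. unfold eps; lra.
  set (a' := a + Rmin (d1/2) ((b-a)/3)).
  set (b' := b - Rmin (d2/2) ((b-a)/3)).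
  assert (Hm1 := Rmin_l (d1/2) ((b-a)/3)). assert (Hm2 := Rmin_r (d1/2) ((b-a)/3)).
  assert (Hm3 := Rmin_l (d2/2) ((b-a)/3)). assert (Hm4 := Rmin_r (d2/2) ((b-a)/3)).
  assert (Hp1 : 0 < Rmin (d1/2) ((b-a)/3)) by (apply Rmin_pos; lra).
  assert (Hp2 : 0 < Rmin (d2/2) ((b-a)/3)) by (apply Rmin_pos; lra).
  assert (F b' <= F a').
  { apply (mono_open F F'). unfold a', b'; lra.
    intros; apply Hd; unfold a', b' in *; lra.
    intros; apply Hn; unfold a', b' in *; lra. }
  assert (F a' < F a + eps). { apply H1. unfold a'. rewrite Rabs_right; lra. }
  assert (- F b' < - (F b - eps)). { apply H2. unfold b'. rewrite Rabs_left; lra. }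
  unfold eps in *; lra.
Qed.

Lemma G1 f T : (forall t, 0 <= t -> continuity_pt f t) -> 0 < f 0 ->
  (forall t, 0 <= t <= T -> f t <> 0) -> forall t, 0 <= t <= T -> 0 < f t.
Proof.
  intros Hc H0 Hn t Ht.
  destruct (Rle_lt_or_eq_dec 0 t (proj1 Ht)) as [Hp|He]. 2:{ subst; auto. }
  destruct (Rtotal_order (f t) 0) as [Hl|[He|Hg]]; auto.
  - exfalso. destruct (Ranalysis5.IVT_interv (fun x => - f x) 0 t) as [z [Hz1 Hz2]].
    + intros. apply continuity_pt_opp. apply Hc; lra.
    + auto.
    + lra.
    + lra.
    + apply (Hn z). lra. lra.
  - exfalso; apply (Hn t Ht He).
Qed.

Lemma G2 X k : (forall u, 0 <= u -> continuity_pt X u) ->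
  (forall u, 0 <= u -> continuity_pt k u) ->
  (forall u, 0 < u -> derivable_pt_lim X u (X u * k u)) ->
  0 <= X 0 -> forall t, 0 <= t -> 0 <= X t.
Proof.
  intros HcX Hck Hd H0 t Ht.
  destruct (Rle_or_lt 0 (X t)) as [|Hneg]; auto. exfalso.
  destruct (Rle_lt_or_eq_dec 0 t Ht) as [Hp|He]. 2:{ subst; lra. }
  destruct (continuity_ab_maj (fun u => Rabs (k u)) 0 t Ht) as [Mx [HM _]].
  { intros; apply cp_abs; apply Hck; lra. }
  set (K := Rabs (k Mx)).
  set (V := fun u => X u * X u * exp ((-2*K) * u)).
  assert (HV : forall u, 0 <= u <= t -> V t <= V u).
  { intros u Hu. apply (mono V (fun x => 2 * (X x * X x) * exp ((-2*K)*x) * (k x - K))).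
    - lra.
    - intros x Hx. unfold V.
      apply dl_eq with ((X x * k x * X x + X x * (X x * k x)) * exp ((-2*K)*x) + X x * X x * (exp ((-2*K)*x) * (-2*K))).
      apply (dl_mult (fun y => X y * X y) (fun y => exp ((-2*K)*y))). apply (dl_mult X X); apply Hd; lra. apply dl_expl. ring.
    - intros x Hx. assert (k x <= K). { apply Rle_trans with (Rabs (k x)). apply Rle_abs. apply HM; lra. }
      assert (0 <= X x * X x) by nra. assert (0 < exp ((-2*K)*x)) by apply exp_pos. assert (0 <= X x * X x * exp ((-2*K)*x)) by (apply Rmult_le_pos; lra). nra.
    - intros x Hx. unfold V. apply cp_mult. apply cp_mult; apply HcX; lra.
      apply cp_exp. apply cp_mult. apply cp_const. apply cp_id. }
  assert (HVt : 0 < V t). { unfold V. assert (0 < exp ((-2*K)*t)) by apply exp_pos. apply Rmult_lt_0_compat; nra. }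
  assert (Hnz : forall u, 0 <= u <= t -> X u <> 0).
  { intros u Hu Hz. specialize (HV u Hu). unfold V in HV at 2. rewrite Hz in HV. lra. }
  assert (HX0 : 0 < X 0). { destruct H0 as [|H0]; auto. exfalso; apply (Hnz 0). lra. auto. }
  assert (0 < X t). { apply (G1 X t HcX HX0 Hnz). lra. }
  lra.
Qed.

Theorem mainTheorem2 (b lam gam m mu r n p h beta delta e : R)
  (Hb : 0 < b) (Hlam : 0 < lam) (Hgam : 0 < gam) (Hm : 0 < m) (Hmu : 0 < mu)
  (Hr : 0 < r) (Hn : 0 < n) (Hp : 0 < p) (Hh : 0 < h) (Hbeta : 0 < beta)
  (Hdelta : 0 < delta) (He : 0 < e)
  (Hrn : r < n)
  (B I M N : R -> R)
  (Hsol : is_solution_S b lam gam m mu r n p h beta delta e B I M N)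
  (Hinit : in_D0 (B 0) (I 0) (M 0) (N 0)) :
  forall eps, 0 < eps -> exists T, forall t, T <= t -> Rabs (M t + N t) < eps.
Proof.
  destruct Hsol as [HP [HD [RB [RI [RM RN]]]]].
  destruct Hinit as [HB0 [HI0 [HM0 [HN0 HP0]]]].
  assert (cB : forall t, 0 <= t -> continuity_pt (ext B) t).
  { apply ext_cont; auto. intros t Ht. apply derivable_continuous_pt.
    exact (exist _ _ (proj1 (HD t Ht))). }
  assert (cI : forall t, 0 <= t -> continuity_pt (ext I) t).
  { apply ext_cont; auto. intros t Ht. apply derivable_continuous_pt.
    exact (exist _ _ (proj1 (proj2 (HD t Ht)))). }
  assert (cM : forall t, 0 <= t -> continuity_pt (ext M) t).
  { apply ext_cont; auto. intros t Ht. apply derivable_continuous_pt.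
    exact (exist _ _ (proj1 (proj2 (proj2 (HD t Ht))))). }
  assert (cN : forall t, 0 <= t -> continuity_pt (ext N) t).
  { apply ext_cont; auto. intros t Ht. apply derivable_continuous_pt.
    exact (exist _ _ (proj2 (proj2 (proj2 (HD t Ht))))). }
  assert (dB : forall t, 0 < t -> derivable_pt_lim (ext B) t
     (fB b lam gam m (ext B t) (ext I t) (ext M t) (ext N t))).
  { intros t Ht. rewrite !(ext_eq _ t) by lra. apply ext_deriv; auto. apply (HD t Ht). }
  assert (dM : forall t, 0 < t -> derivable_pt_lim (ext M) t
     (fM r n p h beta delta e (ext B t) (ext I t) (ext M t) (ext N t))).
  { intros t Ht. rewrite !(ext_eq _ t) by lra. apply ext_deriv; auto. apply (HD t Ht). }
  assert (dN : forall t, 0 < t -> derivable_pt_lim (ext N) t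
     (fN n p h beta delta e (ext B t) (ext I t) (ext M t) (ext N t))).
  { intros t Ht. rewrite !(ext_eq _ t) by lra. apply ext_deriv; auto. apply (HD t Ht). }
  assert (cP : forall t, 0 <= t -> continuity_pt (fun u => ext B u + ext I u) t).
  { intros; apply cp_plus; auto. }
  assert (Ppos : forall t, 0 <= t -> 0 < ext B t + ext I t).
  { intros t Ht. apply (G1 (fun u => ext B u + ext I u) t cP).
    - rewrite !ext_eq by lra. lra.
    - intros u Hu. rewrite !ext_eq by lra. apply HP; lra.
    - lra. }
  assert (Bpos : forall t, 0 <= t -> 0 <= ext B t).
  { apply (G2 (ext B) (fun u => b / (ext B u + ext I u) - lam * ext N u - gam * ext I u - m)); auto.
    - intros u Hu. apply cp_minus. apply cp_minus. apply cp_minus.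
      apply cp_div. apply cp_const. apply cP; auto. specialize (Ppos u Hu); lra.
      apply cp_mult. apply cp_const. auto. apply cp_mult. apply cp_const. auto. apply cp_const.
    - intros u Hu. eapply dl_eq. apply dB; auto. unfold fB.
      specialize (Ppos u (Rlt_le _ _ Hu)). field. lra.
    - rewrite ext_eq by lra; auto. }
  set (kS := fun u => (r - n) - p * (ext M u + ext N u) / (h * (ext B u + ext I u)) - e * ext B u).
  assert (ckS : forall u, 0 <= u -> continuity_pt kS u).
  { intros u Hu. unfold kS. apply cp_minus. apply cp_minus. apply cp_const.
    apply cp_div. apply cp_mult. apply cp_const. apply cp_plus; auto.
    apply cp_mult. apply cp_const. auto. specialize (Ppos u Hu); nra.
    apply cp_mult. apply cp_const. auto. }
  assert (dS : forall u, 0 < u -> derivable_pt_lim (fun y => ext M y + ext N y) u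
             ((ext M u + ext N u) * kS u)).
  { intros u Hu. eapply dl_eq. apply dl_plus. apply dM; auto. apply dN; auto.
    unfold fM, fN, kS. specialize (Ppos u (Rlt_le _ _ Hu)). field. nra. }
  assert (Spos : forall t, 0 <= t -> 0 <= ext M t + ext N t).
  { apply (G2 (fun y => ext M y + ext N y) kS); auto.
    intros; apply cp_plus; auto. rewrite !ext_eq by lra; lra. }
  set (S0 := ext M 0 + ext N 0).
  assert (HW : forall t, 0 <= t -> (ext M t + ext N t) * exp ((n - r) * t) <= S0).
  { intros t Ht.
    assert (S0 = (ext M 0 + ext N 0) * exp ((n - r) * 0)).
    { unfold S0. rewrite Rmult_0_r, exp_0. ring. }
    rewrite H.
    apply (mono (fun u => (ext M u + ext N u) * exp ((n - r) * u))
                (fun u => (ext M u + ext N u) * exp ((n - r) * u) * (kS u + (n - r)))); auto.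
    - intros x Hx. eapply dl_eq.
      apply (dl_mult (fun y => ext M y + ext N y) (fun y => exp ((n - r) * y))).
      apply dS; lra. apply dl_expl. ring.
    - intros x Hx. assert (0 <= ext M x + ext N x) by (apply Spos; lra).
      assert (0 < exp ((n-r)*x)) by apply exp_pos.
      assert (0 <= ext B x) by (apply Bpos; lra).
      assert (0 < ext B x + ext I x) by (apply Ppos; lra).
      assert (0 <= p * (ext M x + ext N x) / (h * (ext B x + ext I x))).
      { unfold Rdiv. apply Rmult_le_pos. nra. left; apply Rinv_0_lt_compat; nra. }
      assert (kS x + (n - r) <= 0) by (unfold kS; nra).
      assert (0 <= (ext M x + ext N x) * exp ((n - r) * x)) by (apply Rmult_le_pos; lra).
      nra.
    - intros x Hx. apply cp_mult. apply cp_plus; apply cM || apply cN; lra.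
      apply cp_exp. apply cp_mult. apply cp_const. apply cp_id. }
  assert (HS0 : 0 <= S0) by (apply Spos; lra).
  intros eps Heps. exists (S0 / (eps * (n - r))). intros t Ht.
  assert (HT0 : 0 <= S0 / (eps * (n - r))).
  { unfold Rdiv. apply Rmult_le_pos; auto. left; apply Rinv_0_lt_compat; nra. }
  assert (Ht0 : 0 <= t) by lra.
  specialize (HW t Ht0). specialize (Spos t Ht0).
  rewrite !ext_eq in HW, Spos by lra.
  rewrite Rabs_right by lra.
  assert (1 + (n - r) * t <= exp ((n - r) * t)) by apply exp_ineq1_le.
  assert (HT1 : S0 <= eps * (n - r) * t).
  { assert (S0 = eps * (n - r) * (S0 / (eps * (n - r)))) by (field; nra).
    rewrite H0. apply Rmult_le_compat_l; nra. }
  destruct (Rlt_or_le (M t + N t) eps) as [|Hge]; auto.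
  exfalso.
  assert ((M t + N t) * (1 + (n - r) * t) <= (M t + N t) * exp ((n - r) * t)).
  { apply Rmult_le_compat_l; lra. }
  assert (eps * (1 + (n - r) * t) <= (M t + N t) * (1 + (n - r) * t)).
  { apply Rmult_le_compat_r; nra. }
  nra.
Qed.
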